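(* Let $Y$ be a Hilbert space and $r=2$. Let $F$ be Fréchet differentiable and satisfy Assumption (A4) with constants $\rho$ and $K$, and assume $\mathcal M_\rho$ is contained in the interior of $\mathcal D(F)$. Let $y^\delta\in Y$, $\alpha>0$, let $x_\alpha^\delta$ be a minimizer of $\|F(x)-y^\delta\|^2+\alpha\mathcal R(x)$ over $\mathcal D(F)$ and $x_\alpha$ a minimizer of $\|F(x)-y\|^2+\alpha\mathcal R(x)$ over $\mathcal D(F)$, and assume $x^\delta_\alpha,x_\alpha\in\mathcal M_\rho$. Then $\xi_\alpha:=\frac{2}{\alpha}F'(x_\alpha)^*(y-F(x_\alpha))\in\partial\mathcal R(x_\alpha)$ and $$\|F(x^\delta_\alpha)-y^\delta+y-F(x_\alpha)\|^2+2\alpha\Big(1-\frac{4K^2\|F(x_\alpha)-y\|^2}{\alpha}\Big)D_{\xi_\alpha}\mathcal R(x^\delta_\alpha,x_\alpha)\le3\|y^\delta-y\|^2.$$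
   Context: Setting: $X$ is a reflexive Banach space, $Y$ a Hilbert space (identified with its dual, so $F'(x)^*:Y\to X^*$), $F:\mathcal D(F)\subset X\to Y$ weakly closed, $\mathcal R:X\to[0,\infty]$ proper, lower semicontinuous, convex; $F(x)=y$ has a solution in $\mathcal D(\mathcal R)$ and $x^\dagger$ is an $\mathcal R$-minimizing solution (a solution minimizing $\mathcal R$ among all solutions of $F(x)=y$). $\partial\mathcal R$ is the subdifferential and $D_\xi\mathcal R(\bar x,x)=\mathcal R(\bar x)-\mathcal R(x)-\langle\xi,\bar x-x\rangle$ for $\xi\in\partial\mathcal R(x)$. $\mathcal M_\rho:=\{x\in\mathcal D(F):\mathcal R(x)<\rho\}$. Assumption (A4): $F$ is Fréchet differentiable with derivative $F'$, and there exist $\rho>\mathcal R(x^\dagger)$ and $K\ge0$ such that $\|F(\bar x)-F(x)-F'(x)(\bar x-x)\|\le K[D_\xi\mathcal R(\bar x,x)]^{1/2}\|F(\bar x)-F(x)\|$ for all $\bar x,x\in\mathcal M_\rho$ and all $\xi\in\partial\mathcal R(x)$. *)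

(* Defs.v *)
From Stdlib Require Import Reals Lra.
Open Scope R_scope.

Record NormedSpace := mkNormedSpace {
  ns_car :> Type;
  ns_zero : ns_car;
  ns_add : ns_car -> ns_car -> ns_car;
  ns_opp : ns_car -> ns_car;
  ns_scal : R -> ns_car -> ns_car;
  ns_norm : ns_car -> R;
  ns_add_assoc : forall u v w, ns_add u (ns_add v w) = ns_add (ns_add u v) w;
  ns_add_comm : forall u v, ns_add u v = ns_add v u;
  ns_add_zero : forall u, ns_add u ns_zero = u;
  ns_add_opp : forall u, ns_add u (ns_opp u) = ns_zero;
  ns_scal_assoc : forall a b u, ns_scal a (ns_scal b u) = ns_scal (a * b) u;
  ns_scal_one : forall u, ns_scal 1 u = u;
  ns_scal_distr_l : forall a u v, ns_scal a (ns_add u v) = ns_add (ns_scal a u) (ns_scal a v);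
  ns_scal_distr_r : forall a b u, ns_scal (a + b) u = ns_add (ns_scal a u) (ns_scal b u);
  ns_norm_eq0 : forall u, ns_norm u = 0 -> u = ns_zero;
  ns_norm_triangle : forall u v, ns_norm (ns_add u v) <= ns_norm u + ns_norm v;
  ns_norm_scal : forall a u, ns_norm (ns_scal a u) = Rabs a * ns_norm u
}.

Definition ns_sub (X : NormedSpace) (u v : X) : X := ns_add X u (ns_opp X v).

Record HilbertSpace := mkHilbertSpace {
  hs_car :> Type;
  hs_zero : hs_car;
  hs_add : hs_car -> hs_car -> hs_car;
  hs_opp : hs_car -> hs_car;
  hs_scal : R -> hs_car -> hs_car;
  hs_inner : hs_car -> hs_car -> R;
  hs_add_assoc : forall u v w, hs_add u (hs_add v w) = hs_add (hs_add u v) w;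
  hs_add_comm : forall u v, hs_add u v = hs_add v u;
  hs_add_zero : forall u, hs_add u hs_zero = u;
  hs_add_opp : forall u, hs_add u (hs_opp u) = hs_zero;
  hs_scal_assoc : forall a b u, hs_scal a (hs_scal b u) = hs_scal (a * b) u;
  hs_scal_one : forall u, hs_scal 1 u = u;
  hs_scal_distr_l : forall a u v, hs_scal a (hs_add u v) = hs_add (hs_scal a u) (hs_scal a v);
  hs_scal_distr_r : forall a b u, hs_scal (a + b) u = hs_add (hs_scal a u) (hs_scal b u);
  hs_inner_sym : forall u v, hs_inner u v = hs_inner v u;
  hs_inner_add_l : forall u v w, hs_inner (hs_add u v) w = hs_inner u w + hs_inner v w;
  hs_inner_scal_l : forall a u v, hs_inner (hs_scal a u) v = a * hs_inner u v;
  hs_inner_pos : forall u, 0 <= hs_inner u u;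
  hs_inner_eq0 : forall u, hs_inner u u = 0 -> u = hs_zero
}.

Definition hs_sub (Y : HilbertSpace) (u v : Y) : Y := hs_add Y u (hs_opp Y v).
Definition hs_norm (Y : HilbertSpace) (u : Y) : R := sqrt (hs_inner Y u u).

Definition ns_complete (X : NormedSpace) : Prop :=
  forall u : nat -> X,
    (forall eps, eps > 0 -> exists N, forall m n, (m >= N)%nat -> (n >= N)%nat ->
        ns_norm X (ns_sub X (u m) (u n)) < eps) ->
    exists x : X, forall eps, eps > 0 -> exists N, forall n, (n >= N)%nat ->
        ns_norm X (ns_sub X (u n) x) < eps.

Definition hs_complete (Y : HilbertSpace) : Prop :=
  forall u : nat -> Y,
    (forall eps, eps > 0 -> exists N, forall m n, (m >= N)%nat -> (n >= N)%nat ->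
        hs_norm Y (hs_sub Y (u m) (u n)) < eps) ->
    exists x : Y, forall eps, eps > 0 -> exists N, forall n, (n >= N)%nat ->
        hs_norm Y (hs_sub Y (u n) x) < eps.

Definition is_dual (X : NormedSpace) (f : X -> R) : Prop :=
  (forall u v, f (ns_add X u v) = f u + f v) /\
  (forall a u, f (ns_scal X a u) = a * f u) /\
  (exists M, forall u, Rabs (f u) <= M * ns_norm X u).

Definition reflexive (X : NormedSpace) : Prop :=
  forall Phi : (X -> R) -> R,
    (forall f g, is_dual X f -> is_dual X g -> Phi (fun u => f u + g u) = Phi f + Phi g) ->
    (forall a f, is_dual X f -> Phi (fun u => a * f u) = a * Phi f) ->
    (exists C, forall f M, is_dual X f -> 0 <= M ->
         (forall u, Rabs (f u) <= M * ns_norm X u) -> Rabs (Phi f) <= C * M) ->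
    exists x : X, forall f, is_dual X f -> Phi f = f x.

Definition is_bounded_linear (X : NormedSpace) (Y : HilbertSpace) (A : X -> Y) : Prop :=
  (forall u v, A (ns_add X u v) = hs_add Y (A u) (A v)) /\
  (forall a u, A (ns_scal X a u) = hs_scal Y a (A u)) /\
  (exists M, forall u, hs_norm Y (A u) <= M * ns_norm X u).

(* Hilbert-space adjoint (Y identified with its dual): <A^T w, h> = (w, A h) *)
Definition adjoint (X : NormedSpace) (Y : HilbertSpace) (A : X -> Y) (w : Y) : X -> R :=
  fun h => hs_inner Y w (A h).

Definition frechet_derivative (X : NormedSpace) (Y : HilbertSpace)
    (DF : X -> Prop) (F : X -> Y) (F' : X -> X -> Y) : Prop :=
  forall x, DF x ->
    is_bounded_linear X Y (F' x) /\
    forall eps, eps > 0 -> exists del, del > 0 /\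
      forall h, DF (ns_add X x h) -> ns_norm X h < del ->
        hs_norm Y (hs_sub Y (hs_sub Y (F (ns_add X x h)) (F x)) (F' x h))
          <= eps * ns_norm X h.

Definition weak_cv_X (X : NormedSpace) (u : nat -> X) (x : X) : Prop :=
  forall f, is_dual X f -> Un_cv (fun n => f (u n)) (f x).
Definition weak_cv_Y (Y : HilbertSpace) (v : nat -> Y) (w : Y) : Prop :=
  forall z, Un_cv (fun n => hs_inner Y (v n) z) (hs_inner Y w z).

Definition weakly_closed (X : NormedSpace) (Y : HilbertSpace)
    (DF : X -> Prop) (F : X -> Y) : Prop :=
  forall (u : nat -> X) (x : X) (w : Y),
    (forall n, DF (u n)) -> weak_cv_X X u x -> weak_cv_Y Y (fun n => F (u n)) w ->
    DF x /\ F x = w.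

Inductive ereal := EFin (r : R) | EInf.

Definition ereal_le (a b : ereal) : Prop :=
  match a, b with
  | _, EInf => True
  | EInf, EFin _ => False
  | EFin x, EFin y => x <= y
  end.

(* finite part (only used where the value is known to be finite) *)
Definition fin (a : ereal) : R := match a with EFin r => r | EInf => 0 end.

Definition proper_fun (X : NormedSpace) (Rf : X -> ereal) : Prop :=
  exists x r, Rf x = EFin r.

Definition nonneg_fun (X : NormedSpace) (Rf : X -> ereal) : Prop :=
  forall x r, Rf x = EFin r -> 0 <= r.

Definition convex_fun (X : NormedSpace) (Rf : X -> ereal) : Prop :=
  forall x z rx rz t, Rf x = EFin rx -> Rf z = EFin rz -> 0 <= t <= 1 ->
    ereal_le (Rf (ns_add X (ns_scal X t x) (ns_scal X (1 - t) z)))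
             (EFin (t * rx + (1 - t) * rz)).

(* lower semicontinuity (norm topology) = closed sublevel sets *)
Definition lsc_fun (X : NormedSpace) (Rf : X -> ereal) : Prop :=
  forall (u : nat -> X) (x : X) (c : R),
    (forall eps, eps > 0 -> exists N, forall n, (n >= N)%nat ->
        ns_norm X (ns_sub X (u n) x) < eps) ->
    (forall n, ereal_le (Rf (u n)) (EFin c)) ->
    ereal_le (Rf x) (EFin c).

Definition subdiff (X : NormedSpace) (Rf : X -> ereal) (x : X) (xi : X -> R) : Prop :=
  is_dual X xi /\
  exists rx, Rf x = EFin rx /\
    forall z, ereal_le (EFin (rx + xi (ns_sub X z x))) (Rf z).

(* Bregman distance D_xi R(xb, x) (for R(xb), R(x) finite) *)
Definition bregman (X : NormedSpace) (Rf : X -> ereal) (xi : X -> R) (xb x : X) : R :=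
  fin (Rf xb) - fin (Rf x) - xi (ns_sub X xb x).

Definition M_rho (X : NormedSpace) (DF : X -> Prop) (Rf : X -> ereal) (rho : R) (x : X) : Prop :=
  DF x /\ exists r, Rf x = EFin r /\ r < rho.

Definition R_min_solution (X : NormedSpace) (Y : HilbertSpace)
    (DF : X -> Prop) (F : X -> Y) (Rf : X -> ereal) (y : Y) (xd : X) : Prop :=
  DF xd /\ F xd = y /\
  forall x, DF x -> F x = y -> ereal_le (Rf xd) (Rf x).

Definition assumption_A4 (X : NormedSpace) (Y : HilbertSpace)
    (DF : X -> Prop) (F : X -> Y) (F' : X -> X -> Y) (Rf : X -> ereal)
    (xd : X) (rho K : R) : Prop :=
  frechet_derivative X Y DF F F' /\
  (exists r, Rf xd = EFin r /\ r < rho) /\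
  0 <= K /\
  forall xb x xi, M_rho X DF Rf rho xb -> M_rho X DF Rf rho x -> subdiff X Rf x xi ->
    hs_norm Y (hs_sub Y (hs_sub Y (F xb) (F x)) (F' x (ns_sub X xb x)))
      <= K * sqrt (bregman X Rf xi xb x) * hs_norm Y (hs_sub Y (F xb) (F x)).

Definition interior_pt (X : NormedSpace) (D : X -> Prop) (x : X) : Prop :=
  exists del, del > 0 /\ forall z, ns_norm X (ns_sub X z x) < del -> D z.

Definition tikhonov (X : NormedSpace) (Y : HilbertSpace) (F : X -> Y) (Rf : X -> ereal)
    (alpha : R) (y : Y) (x : X) : ereal :=
  match Rf x with
  | EFin r => EFin (hs_norm Y (hs_sub Y (F x) y) ^ 2 + alpha * r)
  | EInf => EInf
  end.

Definition is_minimizer (X : NormedSpace) (Y : HilbertSpace) (DF : X -> Prop)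
    (F : X -> Y) (Rf : X -> ereal) (alpha : R) (y : Y) (x : X) : Prop :=
  DF x /\ forall z, DF z -> ereal_le (tikhonov X Y F Rf alpha y x) (tikhonov X Y F Rf alpha y z).

(* Main.v *)
Require Import Defs.
From Stdlib Require Import Reals Lra Psatz.
Open Scope R_scope.


Lemma sq_le (a b : R) : 0 <= b -> a * a <= b * b -> a <= b.
Proof.
  intros Hb H. destruct (Rle_lt_dec a b) as [Hl|Hl]; auto. exfalso.
  assert (b * b < a * a) by (apply Rmult_le_0_lt_compat; lra). lra.
Qed.

Lemma hs_zero_add (Y : HilbertSpace) (u : Y) : hs_add Y (hs_zero Y) u = u.
Proof. rewrite hs_add_comm; apply hs_add_zero. Qed.

Lemma hs_scal0 (Y : HilbertSpace) (u : Y) : hs_scal Y 0 u = hs_zero Y.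
Proof.
  assert (H : hs_scal Y 0 u = hs_add Y (hs_scal Y 0 u) (hs_scal Y 0 u)).
  { rewrite <- hs_scal_distr_r; f_equal; ring. }
  rewrite <- (hs_add_opp Y (hs_scal Y 0 u)).
  rewrite H at 2. rewrite <- hs_add_assoc, hs_add_opp, hs_add_zero. reflexivity.
Qed.

Lemma hs_opp_scal (Y : HilbertSpace) (u : Y) : hs_opp Y u = hs_scal Y (-1) u.
Proof.
  assert (E : hs_add Y (hs_scal Y (-1) u) u = hs_zero Y).
  { rewrite <- (hs_scal_one Y u) at 2. rewrite <- hs_scal_distr_r.
    replace (-1 + 1) with 0 by ring. apply hs_scal0. }
  rewrite <- (hs_add_zero Y (hs_scal Y (-1) u)).
  rewrite <- (hs_add_opp Y u), hs_add_assoc, E, hs_zero_add. reflexivity.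
Qed.

Lemma inner_add_r (Y : HilbertSpace) (u v w : Y) :
  hs_inner Y u (hs_add Y v w) = hs_inner Y u v + hs_inner Y u w.
Proof. rewrite hs_inner_sym, hs_inner_add_l, (hs_inner_sym Y v), (hs_inner_sym Y w); auto. Qed.

Lemma inner_scal_r (Y : HilbertSpace) a (u v : Y) :
  hs_inner Y u (hs_scal Y a v) = a * hs_inner Y u v.
Proof. rewrite hs_inner_sym, hs_inner_scal_l, hs_inner_sym; auto. Qed.

Lemma inner_opp_l (Y : HilbertSpace) (u v : Y) :
  hs_inner Y (hs_opp Y u) v = - hs_inner Y u v.
Proof. rewrite hs_opp_scal, hs_inner_scal_l; ring. Qed.

Lemma inner_opp_r (Y : HilbertSpace) (u v : Y) :
  hs_inner Y u (hs_opp Y v) = - hs_inner Y u v.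
Proof. rewrite hs_opp_scal, inner_scal_r; ring. Qed.

Lemma inner_zero_r (Y : HilbertSpace) (u : Y) : hs_inner Y u (hs_zero Y) = 0.
Proof. rewrite <- (hs_scal0 Y (hs_zero Y)), inner_scal_r; ring. Qed.

Lemma norm_sq (Y : HilbertSpace) (u : Y) : hs_norm Y u ^ 2 = hs_inner Y u u.
Proof. unfold hs_norm; simpl; rewrite Rmult_1_r; apply sqrt_sqrt, hs_inner_pos. Qed.

Lemma norm_nonneg (Y : HilbertSpace) (u : Y) : 0 <= hs_norm Y u.
Proof. apply sqrt_pos. Qed.

Lemma CS (Y : HilbertSpace) (u v : Y) :
  Rabs (hs_inner Y u v) <= hs_norm Y u * hs_norm Y v.
Proof.
  pose proof (norm_sq Y u) as Hu. pose proof (norm_sq Y v) as Hv.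
  pose proof (norm_nonneg Y u). pose proof (norm_nonneg Y v).
  pose proof (hs_inner_pos Y v) as Hvp.
  destruct (Req_dec (hs_inner Y v v) 0) as [Hz|Hz].
  { apply hs_inner_eq0 in Hz; subst. rewrite inner_zero_r, Rabs_R0.
    apply Rmult_le_pos; auto. }
  set (t := - hs_inner Y u v / hs_inner Y v v).
  pose proof (hs_inner_pos Y (hs_add Y u (hs_scal Y t v))) as Hp.
  rewrite hs_inner_add_l, !inner_add_r, !hs_inner_scal_l, !inner_scal_r,
    (hs_inner_sym Y v u) in Hp.
  assert (Hq : hs_inner Y u v * hs_inner Y u v <= hs_inner Y u u * hs_inner Y v v).
  { assert (Hvv : 0 < hs_inner Y v v) by lra.
    unfold t in Hp.
    assert (E : hs_inner Y u u + - hs_inner Y u v / hs_inner Y v v * hs_inner Y u v +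
      (- hs_inner Y u v / hs_inner Y v v * hs_inner Y u v +
       - hs_inner Y u v / hs_inner Y v v * (- hs_inner Y u v / hs_inner Y v v * hs_inner Y v v))
      = (hs_inner Y u u * hs_inner Y v v - hs_inner Y u v * hs_inner Y u v) / hs_inner Y v v)
      by (field; lra).
    rewrite E in Hp.
    apply Rmult_le_compat_r with (r := hs_inner Y v v) in Hp; [|lra].
    unfold Rdiv in Hp. rewrite Rmult_0_l, Rmult_assoc, Rinv_l, Rmult_1_r in Hp; lra. }
  simpl in Hu, Hv. rewrite Rmult_1_r in Hu, Hv.
  assert (Ha : Rabs (hs_inner Y u v) * Rabs (hs_inner Y u v) = hs_inner Y u v * hs_inner Y u v)
    by (unfold Rabs; destruct Rcase_abs; ring).
  destruct (Rle_lt_dec (Rabs (hs_inner Y u v)) (hs_norm Y u * hs_norm Y v)) as [Hl|Hl]; auto.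
  exfalso.
  assert (Hm : (hs_norm Y u * hs_norm Y v) * (hs_norm Y u * hs_norm Y v)
     < Rabs (hs_inner Y u v) * Rabs (hs_inner Y u v)).
  { apply Rmult_le_0_lt_compat; auto; apply Rmult_le_pos; auto. }
  rewrite Ha in Hm.
  replace ((hs_norm Y u * hs_norm Y v) * (hs_norm Y u * hs_norm Y v)) with
    ((hs_norm Y u * hs_norm Y u) * (hs_norm Y v * hs_norm Y v)) in Hm by ring.
  rewrite Hu, Hv in Hm. lra.
Qed.

Lemma CS' (Y : HilbertSpace) (u v : Y) :
  hs_inner Y u v <= hs_norm Y u * hs_norm Y v /\ - (hs_norm Y u * hs_norm Y v) <= hs_inner Y u v.
Proof. pose proof (CS Y u v). unfold Rabs in H; destruct Rcase_abs; split; lra. Qed.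

Lemma norm_tri (Y : HilbertSpace) (u v : Y) :
  hs_norm Y (hs_add Y u v) <= hs_norm Y u + hs_norm Y v.
Proof.
  pose proof (norm_sq Y u) as Hu. pose proof (norm_sq Y v) as Hv.
  pose proof (norm_sq Y (hs_add Y u v)) as Huv.
  pose proof (norm_nonneg Y u). pose proof (norm_nonneg Y v).
  pose proof (norm_nonneg Y (hs_add Y u v)).
  rewrite hs_inner_add_l, !inner_add_r, (hs_inner_sym Y v u) in Huv.
  destruct (CS' Y u v). simpl in *. rewrite !Rmult_1_r in *.
  apply sq_le; [lra|]. rewrite Huv.
  replace ((hs_norm Y u + hs_norm Y v) * (hs_norm Y u + hs_norm Y v)) with
   (hs_norm Y u * hs_norm Y u + 2 * (hs_norm Y u * hs_norm Y v) + hs_norm Y v * hs_norm Y v) by ring.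
  lra.
Qed.

Lemma norm_scal (Y : HilbertSpace) a (u : Y) :
  hs_norm Y (hs_scal Y a u) = Rabs a * hs_norm Y u.
Proof.
  pose proof (norm_sq Y u) as Hu. pose proof (norm_sq Y (hs_scal Y a u)) as Hau.
  rewrite hs_inner_scal_l, inner_scal_r in Hau.
  pose proof (norm_nonneg Y u). pose proof (norm_nonneg Y (hs_scal Y a u)).
  pose proof (Rabs_pos a).
  assert (Ha : Rabs a * Rabs a = a * a) by (unfold Rabs; destruct Rcase_abs; ring).
  simpl in *. rewrite !Rmult_1_r in *.
  apply Rle_antisym; apply sq_le; try apply Rmult_le_pos; auto.
  - rewrite Hau. replace (Rabs a * hs_norm Y u * (Rabs a * hs_norm Y u)) with
      ((Rabs a * Rabs a) * (hs_norm Y u * hs_norm Y u)) by ring. rewrite Ha, Hu. lra.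
  - rewrite Hau. replace (Rabs a * hs_norm Y u * (Rabs a * hs_norm Y u)) with
      ((Rabs a * Rabs a) * (hs_norm Y u * hs_norm Y u)) by ring. rewrite Ha, Hu. lra.
Qed.

Lemma ns_zero_add (X : NormedSpace) (u : X) : ns_add X (ns_zero X) u = u.
Proof. rewrite ns_add_comm; apply ns_add_zero. Qed.

Lemma ns_scal0 (X : NormedSpace) (u : X) : ns_scal X 0 u = ns_zero X.
Proof.
  assert (H : ns_scal X 0 u = ns_add X (ns_scal X 0 u) (ns_scal X 0 u)).
  { rewrite <- ns_scal_distr_r; f_equal; ring. }
  rewrite <- (ns_add_opp X (ns_scal X 0 u)).
  rewrite H at 2. rewrite <- ns_add_assoc, ns_add_opp, ns_add_zero. reflexivity.
Qed.

Lemma ns_opp_scal (X : NormedSpace) (u : X) : ns_opp X u = ns_scal X (-1) u.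
Proof.
  assert (E : ns_add X (ns_scal X (-1) u) u = ns_zero X).
  { rewrite <- (ns_scal_one X u) at 2. rewrite <- ns_scal_distr_r.
    replace (-1 + 1) with 0 by ring. apply ns_scal0. }
  rewrite <- (ns_add_zero X (ns_scal X (-1) u)).
  rewrite <- (ns_add_opp X u), ns_add_assoc, E, ns_zero_add. reflexivity.
Qed.

Lemma ns_norm_nonneg (X : NormedSpace) (u : X) : 0 <= ns_norm X u.
Proof.
  assert (H0 : ns_norm X (ns_zero X) = 0).
  { rewrite <- (ns_scal0 X u), ns_norm_scal, Rabs_R0; ring. }
  pose proof (ns_norm_triangle X u (ns_opp X u)) as H.
  rewrite ns_add_opp, H0, ns_opp_scal, ns_norm_scal in H.
  assert (Ea : Rabs (-1) = 1) by (unfold Rabs; destruct Rcase_abs; lra). rewrite Ea in H. lra.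
Qed.

Lemma ns_sub_add_cancel (X : NormedSpace) (x k : X) : ns_sub X (ns_add X x k) x = k.
Proof.
  unfold ns_sub. rewrite (ns_add_comm X x k), <- ns_add_assoc, ns_add_opp, ns_add_zero.
  reflexivity.
Qed.

Lemma ns_comb (X : NormedSpace) (t : R) (z x : X) :
  ns_add X (ns_scal X t z) (ns_scal X (1 - t) x) = ns_add X x (ns_scal X t (ns_sub X z x)).
Proof.
  unfold ns_sub. rewrite ns_scal_distr_l, ns_opp_scal, ns_scal_assoc.
  replace (1 - t) with (1 + t * -1) by ring.
  rewrite ns_scal_distr_r, ns_scal_one.
  rewrite ns_add_assoc, ns_add_assoc, (ns_add_comm X (ns_scal X t z) x). reflexivity.
Qed.
Lemma final_real (al K A dn nb D s G E ip : R) :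
  al > 0 -> 0 <= K -> 0 <= A -> 0 <= dn -> 0 <= nb -> s * s = D -> 0 <= s ->
  A ^ 2 + al * D <= dn ^ 2 + 2 * ip -> ip <= nb * G -> G <= K * s * E -> E <= A + dn ->
  A ^ 2 + 2 * al * (1 - 4 * K ^ 2 * nb ^ 2 / al) * D <= 3 * dn ^ 2.
Proof.
  intros Hal HK HA Hdn Hnb Hs Hs0 H1 H2 H3 H4.
  assert (Hc0 : 0 <= K * nb * s) by (apply Rmult_le_pos; [apply Rmult_le_pos|]; auto).
  assert (H5 : ip <= K * nb * s * (A + dn)).
  { apply Rle_trans with (nb * G); auto.
    apply Rle_trans with (nb * (K * s * E)). apply Rmult_le_compat_l; auto.
    replace (nb * (K * s * E)) with ((K * nb * s) * E) by ring.
    apply Rmult_le_compat_l; auto. }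
  assert (Ec : (K * nb * s) ^ 2 = K ^ 2 * nb ^ 2 * D) by (rewrite <- Hs; ring).
  remember (K * nb * s) as c.
  assert (H6 : 2 * c * A <= A ^ 2 / 2 + 2 * c ^ 2).
  { pose proof (Rle_0_sqr (A - 2 * c)). unfold Rsqr in *. nra. }
  assert (H7 : 2 * c * dn <= dn ^ 2 / 2 + 2 * c ^ 2).
  { pose proof (Rle_0_sqr (dn - 2 * c)). unfold Rsqr in *. nra. }
  replace (2 * al * (1 - 4 * K ^ 2 * nb ^ 2 / al) * D) with (2 * al * D - 8 * (K ^ 2 * nb ^ 2 * D))
    by (field; lra).
  rewrite <- Ec. lra.
Qed.

Ltac expand := unfold hs_sub; repeat progress (rewrite ?hs_inner_add_l, ?inner_add_r,
  ?inner_opp_l, ?inner_opp_r, ?hs_inner_scal_l, ?inner_scal_r).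

Theorem lemma3p5
  (X : NormedSpace) (Y : HilbertSpace)
  (HXc : ns_complete X) (HXr : reflexive X) (HYc : hs_complete Y)
  (DF : X -> Prop) (F : X -> Y) (F' : X -> X -> Y) (Rf : X -> ereal) (y : Y) (xd : X)
  (HFw : weakly_closed X Y DF F)
  (HRp : proper_fun X Rf) (HRn : nonneg_fun X Rf)
  (HRl : lsc_fun X Rf) (HRc : convex_fun X Rf)
  (Hsol : exists x r, DF x /\ F x = y /\ Rf x = EFin r)
  (Hxd : R_min_solution X Y DF F Rf y xd)
  (rho K : R)
  (HA4 : assumption_A4 X Y DF F F' Rf xd rho K)
  (Hint : forall x, M_rho X DF Rf rho x -> interior_pt X DF x)
  (ydel : Y) (alpha : R) (Halpha : alpha > 0)
  (xad xa : X)
  (Hxad : is_minimizer X Y DF F Rf alpha ydel xad)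
  (Hxa : is_minimizer X Y DF F Rf alpha y xa)
  (Hxad_M : M_rho X DF Rf rho xad) (Hxa_M : M_rho X DF Rf rho xa) :
  let xia : X -> R :=
    fun h => (2 / alpha) * adjoint X Y (F' xa) (hs_sub Y y (F xa)) h in
  subdiff X Rf xa xia /\
  hs_norm Y (hs_add Y (hs_sub Y (F xad) ydel) (hs_sub Y y (F xa))) ^ 2
    + 2 * alpha * (1 - 4 * K ^ 2 * hs_norm Y (hs_sub Y (F xa) y) ^ 2 / alpha)
        * bregman X Rf xia xad xa
    <= 3 * hs_norm Y (hs_sub Y ydel y) ^ 2.
Proof.
  intro xia.
  destruct HA4 as [HFr [_ [HK HA]]].
  pose proof Hxa_M as [HDxa [rxa [Hrxa _]]].
  pose proof Hxad_M as [HDxad [rxad [Hrxad _]]].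
  destruct (HFr xa HDxa) as [[Hladd [Hlscal [M HM]]] Hfr].
  assert (Hxia : forall h, xia h = 2 / alpha * hs_inner Y (hs_sub Y y (F xa)) (F' xa h))
    by reflexivity.
  assert (H2a : 0 < 2 / alpha) by (apply Rdiv_lt_0_compat; lra).
  assert (Hsub : subdiff X Rf xa xia).
  { split.
    - split; [|split].
      + intros u v. rewrite !Hxia, Hladd, inner_add_r. ring.
      + intros a u. rewrite !Hxia, Hlscal, inner_scal_r. ring.
      + exists (2 / alpha * hs_norm Y (hs_sub Y y (F xa)) * M). intro u.
        rewrite Hxia, Rabs_mult, (Rabs_pos_eq (2 / alpha)) by lra.
        rewrite !Rmult_assoc. apply Rmult_le_compat_l; [lra|].
        apply Rle_trans with (1 := CS _ _ _).
        apply Rmult_le_compat_l; [apply norm_nonneg|]. apply HM.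
    - exists rxa. split; [exact Hrxa|]. intro z.
      destruct (Rf z) as [rz|] eqn:Hz; [|exact I].
      cbn [ereal_le].
      rewrite Hxia.
      remember (ns_sub X z xa) as h eqn:Hh.
      remember (hs_sub Y y (F xa)) as b eqn:Hb.
      remember (hs_inner Y b (F' xa h)) as g eqn:Hg.
      apply Rnot_lt_le; intro Hlt.
      remember (2 * g - alpha * (rz - rxa)) as gam eqn:Hgamd.
      assert (Hgam : gam > 0).
      { apply Rmult_lt_compat_l with (r := alpha) in Hlt; [|lra].
        replace (alpha * (rxa + 2 / alpha * g)) with (alpha * rxa + 2 * g) in Hlt by (field; lra).
        lra. }
      destruct (Hint xa Hxa_M) as [di [Hdi Hdi']].
      remember (hs_norm Y b) as nb eqn:Hnb.
      remember (ns_norm X h) as nh eqn:Hnh.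
      remember (hs_norm Y (F' xa h)) as nFh eqn:HnFh.
      assert (Hnb0 : 0 <= nb) by (subst; apply norm_nonneg).
      assert (Hnh0 : 0 <= nh) by (subst; apply ns_norm_nonneg).
      assert (HnFh0 : 0 <= nFh) by (subst; apply norm_nonneg).
      remember (gam / (4 * (nb * nh + 1))) as eps eqn:Hepsd.
      assert (Heps : eps > 0).
      { subst eps. apply Rdiv_lt_0_compat; [lra|]. nra. }
      assert (Heps2 : 2 * nb * eps * nh < gam / 2).
      { assert (E : eps * (4 * (nb * nh + 1)) = gam) by (subst eps; field; nra).
        nra. }
      destruct (Hfr eps Heps) as [dF [HdF HdF']].
      remember ((nFh + eps * nh) ^ 2) as Q eqn:HQ.
      assert (HQ0 : 0 <= Q) by (subst Q; apply pow2_ge_0).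
      remember (Rmin (Rmin 1 (di / (2 * (nh + 1)))) (Rmin (dF / (2 * (nh + 1))) (gam / (4 * (Q + 1))))) as t eqn:Ht.
      assert (Hx1 : 0 < di / (2 * (nh + 1))) by (apply Rdiv_lt_0_compat; lra).
      assert (Hx2 : 0 < dF / (2 * (nh + 1))) by (apply Rdiv_lt_0_compat; lra).
      assert (Hx3 : 0 < gam / (4 * (Q + 1))) by (apply Rdiv_lt_0_compat; lra).
      assert (Ht0 : 0 < t).
      { subst t. apply Rmin_glb_lt; apply Rmin_glb_lt; lra. }
      assert (Ht1 : t <= 1).
      { subst t. eapply Rle_trans; [apply Rmin_l|]. apply Rmin_l. }
      assert (Ht2 : t <= di / (2 * (nh + 1))).
      { subst t. eapply Rle_trans; [apply Rmin_l|]. apply Rmin_r. }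
      assert (Ht3 : t <= dF / (2 * (nh + 1))).
      { subst t. eapply Rle_trans; [apply Rmin_r|]. apply Rmin_l. }
      assert (Ht4 : t <= gam / (4 * (Q + 1))).
      { subst t. eapply Rle_trans; [apply Rmin_r|]. apply Rmin_r. }
      assert (Htdi : t * nh < di).
      { assert (E : di / (2 * (nh + 1)) * (2 * (nh + 1)) = di) by (field; lra).
        assert (t * nh <= di / (2 * (nh + 1)) * nh) by (apply Rmult_le_compat_r; lra).
        nra. }
      assert (HtdF : t * nh < dF).
      { assert (E : dF / (2 * (nh + 1)) * (2 * (nh + 1)) = dF) by (field; lra).
        assert (t * nh <= dF / (2 * (nh + 1)) * nh) by (apply Rmult_le_compat_r; lra).
        nra. }
      assert (HtQ : t * Q < gam / 2).
      { assert (E : gam / (4 * (Q + 1)) * (4 * (Q + 1)) = gam) by (field; lra).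
        assert (t * Q <= gam / (4 * (Q + 1)) * Q) by (apply Rmult_le_compat_r; lra).
        nra. }
      assert (Hnth : ns_norm X (ns_scal X t h) = t * nh)
        by (rewrite ns_norm_scal, Rabs_pos_eq; subst; lra).
      remember (ns_add X xa (ns_scal X t h)) as p eqn:Hp.
      assert (HDp : DF p).
      { apply Hdi'. rewrite Hp, ns_sub_add_cancel, Hnth. lra. }
      pose proof (HdF' (ns_scal X t h)) as Hfrp.
      rewrite <- Hp in Hfrp. specialize (Hfrp HDp ltac:(lra)). rewrite Hnth in Hfrp.
      pose proof (HRc z xa rz rxa t Hz Hrxa ltac:(lra)) as Hc.
      rewrite ns_comb, <- Hh, <- Hp in Hc.
      destruct (Rf p) as [rp|] eqn:Hrp; [cbn [ereal_le] in Hc|contradiction Hc].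
      destruct Hxa as [_ Hxamin].
      pose proof (Hxamin p HDp) as Hm. unfold tikhonov in Hm. rewrite Hrxa, Hrp in Hm.
      cbn [ereal_le] in Hm.
      rewrite Hlscal in Hfrp.
      remember (hs_sub Y (hs_sub Y (F p) (F xa)) (hs_scal Y t (F' xa h))) as u eqn:Hu.
      assert (Hid : hs_norm Y (hs_sub Y (F xa) y) ^ 2 - hs_norm Y (hs_sub Y (F p) y) ^ 2
        = 2 * t * g + 2 * hs_inner Y b u - hs_norm Y (hs_add Y (hs_scal Y t (F' xa h)) u) ^ 2).
      { rewrite !norm_sq. subst u b g. expand.
        repeat rewrite (hs_inner_sym Y y (F xa)).
        repeat rewrite (hs_inner_sym Y (F p) (F xa)).
        repeat rewrite (hs_inner_sym Y (F' xa h) (F xa)).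
        repeat rewrite (hs_inner_sym Y (F p) y).
        repeat rewrite (hs_inner_sym Y (F' xa h) y).
        repeat rewrite (hs_inner_sym Y (F' xa h) (F p)).
        ring. }
      pose proof (CS' Y b u) as [_ Hcs]. rewrite <- Hnb in Hcs.
      pose proof (norm_tri Y (hs_scal Y t (F' xa h)) u) as Htri.
      rewrite norm_scal, Rabs_pos_eq, <- HnFh in Htri by lra.
      assert (Hu0 : 0 <= hs_norm Y u) by apply norm_nonneg.
      assert (Hwu0 : 0 <= hs_norm Y (hs_add Y (hs_scal Y t (F' xa h)) u)) by apply norm_nonneg.
      assert (Hsq : hs_norm Y (hs_add Y (hs_scal Y t (F' xa h)) u) ^ 2 <= t ^ 2 * Q).
      { replace (t ^ 2 * Q) with ((t * nFh + eps * (t * nh)) ^ 2) by (subst Q; ring).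
        apply pow_incr. lra. }
      assert (Hcu : nb * hs_norm Y u <= nb * (eps * (t * nh))) by (apply Rmult_le_compat_l; lra).
      assert (Hac : alpha * rp <= alpha * (t * rz + (1 - t) * rxa)) by (apply Rmult_le_compat_l; lra).
      assert (Hfin : t * (alpha * (rz - rxa) - (2 * g - 2 * nb * eps * nh - t * Q)) >= 0) by nra.
      assert (Hfin2 : alpha * (rz - rxa) - (2 * g - 2 * nb * eps * nh - t * Q) >= 0).
      { destruct (Rlt_or_le (alpha * (rz - rxa) - (2 * g - 2 * nb * eps * nh - t * Q)) 0); auto.
        - assert (t * (alpha * (rz - rxa) - (2 * g - 2 * nb * eps * nh - t * Q)) < 0)
            by (apply Rmult_pos_neg; lra). lra.
        - lra. }
      lra. }
  split; [exact Hsub|].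
  pose proof (HA xad xa xia Hxad_M Hxa_M Hsub) as HA'.
  assert (HD0 : 0 <= bregman X Rf xia xad xa).
  { destruct Hsub as [_ [r' [Hr' Hsd]]]. specialize (Hsd xad).
    rewrite Hrxad in Hsd. cbn [ereal_le] in Hsd. rewrite Hrxa in Hr'. injection Hr' as <-.
    unfold bregman. rewrite Hrxad, Hrxa. simpl fin. lra. }
  assert (HDe : bregman X Rf xia xad xa = rxad - rxa
     - 2 / alpha * hs_inner Y (hs_sub Y y (F xa)) (F' xa (ns_sub X xad xa))).
  { unfold bregman. rewrite Hrxad, Hrxa, Hxia. simpl fin. reflexivity. }
  destruct Hxad as [_ Hxadmin].
  pose proof (Hxadmin xa HDxa) as Hm. unfold tikhonov in Hm. rewrite Hrxa, Hrxad in Hm.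
  cbn [ereal_le] in Hm.
  pose proof (CS' Y (hs_sub Y y (F xa))
     (hs_sub Y (hs_sub Y (F xad) (F xa)) (F' xa (ns_sub X xad xa)))) as [Hcs _].
  pose proof (norm_tri Y (hs_add Y (hs_sub Y (F xad) ydel) (hs_sub Y y (F xa)))
     (hs_sub Y ydel y)) as Htri.
  assert (Heqn : hs_norm Y (hs_add Y (hs_add Y (hs_sub Y (F xad) ydel) (hs_sub Y y (F xa)))
     (hs_sub Y ydel y)) = hs_norm Y (hs_sub Y (F xad) (F xa))).
  { unfold hs_norm. f_equal. expand.
    repeat rewrite (hs_inner_sym Y ydel (F xad)).
    repeat rewrite (hs_inner_sym Y (F xa) (F xad)).
    repeat rewrite (hs_inner_sym Y y (F xad)).
    repeat rewrite (hs_inner_sym Y (F xa) ydel).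
    repeat rewrite (hs_inner_sym Y y ydel).
    repeat rewrite (hs_inner_sym Y (F xa) y).
    ring. }
  rewrite Heqn in Htri.
  assert (Hnb : hs_norm Y (hs_sub Y (F xa) y) = hs_norm Y (hs_sub Y y (F xa))).
  { unfold hs_norm. f_equal. expand. rewrite (hs_inner_sym Y y (F xa)). ring. }
  rewrite Hnb.
  assert (Hkey : hs_norm Y (hs_add Y (hs_sub Y (F xad) ydel) (hs_sub Y y (F xa))) ^ 2
     + alpha * bregman X Rf xia xad xa <= hs_norm Y (hs_sub Y ydel y) ^ 2
     + 2 * hs_inner Y (hs_sub Y y (F xa))
            (hs_sub Y (hs_sub Y (F xad) (F xa)) (F' xa (ns_sub X xad xa)))).
  { rewrite HDe. revert Hm. rewrite !norm_sq.
    replace (alpha * (rxad - rxa - 2 / alpha *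
       hs_inner Y (hs_sub Y y (F xa)) (F' xa (ns_sub X xad xa))))
     with (alpha * rxad - alpha * rxa -
       2 * hs_inner Y (hs_sub Y y (F xa)) (F' xa (ns_sub X xad xa))) by (field; lra).
    expand.
    repeat rewrite (hs_inner_sym Y ydel (F xad)).
    repeat rewrite (hs_inner_sym Y (F xa) (F xad)).
    repeat rewrite (hs_inner_sym Y y (F xad)).
    repeat rewrite (hs_inner_sym Y (F xa) ydel).
    repeat rewrite (hs_inner_sym Y y ydel).
    repeat rewrite (hs_inner_sym Y (F xa) y).
    intro Hm. lra. }
  eapply final_real with (s := sqrt (bregman X Rf xia xad xa)); eauto;
    try apply norm_nonneg.
  apply sqrt_sqrt; auto. apply sqrt_pos.
Qed.
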